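(* Let $(X,\tau)$ be a topological space and $\mathcal{F}:\mathcal{O}(X)^{\mathrm{op}}\to\mathbf{Set}$ a presheaf. Then: (1) $B^1_{\mathcal{F}}$ is a base of compact open sets for $(\Lambda^1_{\mathcal{F}},\tau^1_{\mathcal{F}})$; hence $(\Lambda^1_{\mathcal{F}},\tau^1_{\mathcal{F}})$ is locally compact; (2) for every $G\in\mathrm{St}(\mathrm{RO}(X))$ the stalk $\mathcal{F}_G$ is a discrete and closed subspace of $\Lambda^1_{\mathcal{F}}$; (3) $p^1_{\mathcal{F}}:\Lambda^1_{\mathcal{F}}\to\mathrm{St}(\mathrm{RO}(X))$ is continuous, and for every $U\in\mathcal{O}(X)$ and $f\in\mathcal{F}(U)$, $\dot f$ is a local section of $p^1_{\mathcal{F}}$ over $N_{\mathrm{Reg}(U)}$; hence $\Lambda^1_{\mathcal{F}}$ is an étalé space over $\mathrm{St}(\mathrm{RO}(X))$; (4) $\Lambda^1_{\mathcal{F}}$ is Hausdorff and zero-dimensional, in particular Tychonoff; (5) if $\Lambda^1_{\mathcal{F}}$ has an infinite stalk, then it is non-compact.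
   Context: $\mathcal{O}(X)$ is the set of non-empty open subsets of $X$ ordered by inclusion; for $f\in\mathcal{F}(V)$ and $U\subseteq V$ write $f\restriction U=\mathcal{F}(U\subseteq V)(f)$. $\mathrm{Reg}(U)=\mathrm{Int}\,\mathrm{Cl}\,U$; $\mathrm{RO}(X)$ is the complete boolean algebra of regular open sets; $\mathrm{St}(\mathrm{RO}(X))$ is its Stone space of ultrafilters with clopen sets $N_q=\{G:q\in G\}$, $q\in\mathrm{RO}(X)$. For an ultrafilter $G$ on $\mathrm{RO}(X)$ let $\bar G=\{U\in\mathcal{O}(X):\mathrm{Reg}(U)\in G\}$. For $f\in\mathcal{F}(U_f)$, $g\in\mathcal{F}(U_g)$ with $U_f,U_g\in\bar G$, set $f\equiv_G g$ iff there is $U\in\bar G$ with $U\subseteq U_f\cap U_g$ such that $D_{f,g}=\{V\in\mathcal{O}(X):V\subseteq U_f\cap U_g,\ f\restriction V=g\restriction V\}$ is dense below $U$ (every non-empty open $W\subseteq U$ contains some element of $D_{f,g}$). Let $[f]_G$ be the class of $f$, $\mathcal{F}_G=\{[f]_G:f\in\mathcal{F}(U_f),U_f\in\bar G\}$ (the stalk over $G$), $\Lambda^1_{\mathcal{F}}=\coprod_{G\in\mathrm{St}(\mathrm{RO}(X))}\mathcal{F}_G$ and $p^1_{\mathcal{F}}([f]_G)=G$. For $f\in\mathcal{F}(U)$, $\dot f:N_{\mathrm{Reg}(U)}\to\Lambda^1_{\mathcal{F}}$ is $G\mapsto[f]_G$. $\tau^1_{\mathcal{F}}$ is the topology generated by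 $B^1_{\mathcal{F}}=\{\dot f[N_q]: q\in\mathrm{RO}(X),\ q\subseteq\mathrm{Reg}(U),\ f\in\mathcal{F}(U),\ U\in\mathcal{O}(X)\}$. A local section of a continuous $p:E\to Z$ over an open $V\subseteq Z$ is a continuous $s:V\to E$ with $p\circ s=\mathrm{id}_V$; $p$ is an étalé space if every $e\in E$ has an open neighbourhood $O$ with $p[O]$ open and $p\restriction O:O\to p[O]$ a homeomorphism. *)

(* Defs.v *)
From HB Require Import structures.
From mathcomp Require Import all_boot all_order all_algebra.
From mathcomp Require Import all_classical all_reals all_analysis.
From mathcomp Require Import Rstruct Rstruct_topology.
Set Implicit Arguments. Unset Strict Implicit. Unset Printing Implicit Defensive.
Import Order.TTheory GRing.Theory Num.Theory.
Local Open Scope classical_set_scope.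

Definition is_base (T : topologicalType) (B : set (set T)) :=
  (forall A, B A -> open A) /\
  (forall O : set T, open O -> forall x, O x -> exists A, [/\ B A, A x & A `<=` O]).

Definition zero_dim (T : topologicalType) :=
  exists B : set (set T), is_base B /\ forall A, B A -> clopen A.

Definition tychonoff_space (T : topologicalType) :=
  accessible_space T /\
  forall (a : T) (B : set T), closed B -> ~ B a ->
    exists f : T -> Rdefinitions.R,
      [/\ continuous f, f a = 0%R & forall b, B b -> f b = 1%R].

Definition local_section (E Z : topologicalType) (p : E -> Z) (V : set Z)
  (s : Z -> E) :=
  [/\ open V, {within V, continuous s} & forall z, V z -> p (s z) = z].

Definition homeo_onto_image (E Z : topologicalType) (p : E -> Z) (O : set E) :=
  {within O, continuous p} /\
  exists g : Z -> E,
    [/\ forall z, (p @` O) z -> O (g z) /\ p (g z) = z,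
        forall e, O e -> g (p e) = e &
        {within p @` O, continuous g}].

Definition etale_space (E Z : topologicalType) (p : E -> Z) :=
  forall e : E, exists O : set E,
    [/\ open O, O e, open (p @` O) & homeo_onto_image p O].

Section RO.
Context {X : topologicalType}.

Definition Reg (U : set X) : set X := interior (closure U).

Definition regular_open (q : set X) := Reg q = q.

Definition Oset (U : set X) := open U /\ U !=set0.

(* filters / ultrafilters on the boolean algebra RO(X)
   (order = inclusion, meet = intersection, top = X, bottom = empty) *)
Definition ro_filter (G : set (set X)) :=
  [/\ G `<=` regular_open, G setT,
      forall p q, G p -> G q -> G (p `&` q) &
      forall p q, G p -> regular_open q -> p `<=` q -> G q].

Definition ro_proper_filter (G : set (set X)) := ro_filter G /\ ~ G set0.

Definition ro_ultrafilter (G : set (set X)) :=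
  ro_proper_filter G /\
  forall H, ro_proper_filter H -> G `<=` H -> H = G.

End RO.

Definition St (X : topologicalType) := {G : set (set X) | ro_ultrafilter G}.

HB.instance Definition _ (X : topologicalType) := gen_eqMixin (St X).
HB.instance Definition _ (X : topologicalType) := gen_choiceMixin (St X).

Definition Nq (X : topologicalType) (q : set X) : set (St X) :=
  [set G | proj1_sig G q].

Definition St_subbase (X : topologicalType) : set (set (St X)) :=
  [set A | exists q : set X, regular_open q /\ A = Nq q].

HB.instance Definition _ (X : topologicalType) :=
  @isSubBaseTopological.Build (St X) (set (St X)) (@St_subbase X) id.

Record presheaf (X : topologicalType) := Presheaf {
  sec : set X -> Type;
  res : forall U V : set X, V `<=` U -> sec U -> sec V;
  res_id : forall U (h : U `<=` U) (s : sec U), Oset U -> res h s = s;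
  res_comp : forall U V W (hVU : V `<=` U) (hWV : W `<=` V) (hWU : W `<=` U)
      (s : sec U), Oset U -> Oset V -> Oset W ->
      res hWV (res hVU s) = res hWU s
}.

Unset Implicit Arguments.
Section Etale.
Context {X : topologicalType} (F : presheaf X).

Record Sec := MkSec {
  sdom : set X;
  sdom_O : Oset sdom;
  sect : sec F sdom
}.

Definition agree_on (f g : Sec) (V : set X) :=
  exists (hf : V `<=` sdom f) (hg : V `<=` sdom g),
    res hf (sect f) = res hg (sect g).

Definition Gbar (G : St X) (U : set X) := Oset U /\ proj1_sig G (Reg U).

Definition equivG (G : St X) (f g : Sec) :=
  [/\ Gbar G (sdom f), Gbar G (sdom g) &
   exists U, [/\ Gbar G U, U `<=` sdom f `&` sdom g &
     forall W, Oset W -> W `<=` U ->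
       exists V, [/\ Oset V, V `<=` W, V `<=` sdom f `&` sdom g &
                     agree_on f g V]]].

Definition germ (G : St X) (f : Sec) : set Sec := [set g | equivG G f g].

(* Λ^1_F = coproduct of the stalks: pairs (G, [f]_G) *)
Definition Lambda :=
  {e : St X * set Sec | exists f, Gbar e.1 (sdom f) /\ e.2 = germ e.1 f}.

HB.instance Definition _ := gen_eqMixin Lambda.
HB.instance Definition _ := gen_choiceMixin Lambda.

Definition p1 (e : Lambda) : St X := (proj1_sig e).1.

Definition stalk (G : St X) : set Lambda := [set e | p1 e = G].

Definition dot_image (f : Sec) (q : set X) : set Lambda :=
  [set e | Nq q (p1 e) /\ (proj1_sig e).2 = germ (p1 e) f].

Definition B1 : set (set Lambda) :=
  [set A | exists (f : Sec) (q : set X),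
     [/\ regular_open q, q `<=` Reg (sdom f) & A = dot_image f q]].

End Etale.
Set Implicit Arguments.

HB.instance Definition _ (X : topologicalType) (F : presheaf X) :=
  @isSubBaseTopological.Build (Lambda F) (set (Lambda F)) (B1 F) id.

(* Main.v *)
Require Import Defs.
From HB Require Import structures.
From mathcomp Require Import all_boot all_order all_algebra.
From mathcomp Require Import all_classical all_reals all_analysis.
From mathcomp Require Import Rstruct Rstruct_topology.
Local Open Scope classical_set_scope.
Set Implicit Arguments. Unset Strict Implicit.

Section RegLemmas.
Context {X : topologicalType}.
Implicit Types U V p q : set X.

Lemma open_Reg U : open (Reg U).
Proof. exact: open_interior. Qed.

Lemma Reg_sub U : open U -> U `<=` Reg U.
Proof.
move=> oU; rewrite /Reg -open_subsetE //; exact: subset_closure.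
Qed.

Lemma Reg_mono U V : U `<=` V -> Reg U `<=` Reg V.
Proof. by move=> UV; apply/interiorS/closureS. Qed.

Lemma Reg_reg U : regular_open (Reg U).
Proof. exact: (interior_closure_idem U). Qed.

Lemma reg_open p : regular_open p -> open p.
Proof. by move=> <-; exact: open_Reg. Qed.

Lemma regI p q : regular_open p -> regular_open q -> regular_open (p `&` q).
Proof.
move=> rp rq; rewrite /regular_open eqEsubset; split.
  move=> x Hx; split.
    by rewrite -rp; apply: (@Reg_mono (p `&` q) p _ _ Hx) => y [].
  by rewrite -rq; apply: (@Reg_mono (p `&` q) q _ _ Hx) => y [].
by apply: Reg_sub; apply: openI; exact: reg_open.
Qed.

Lemma reg_setT : regular_open (@setT X).
Proof. by rewrite /regular_open /Reg closureT interiorT. Qed.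

Lemma reg_set0 : regular_open (@set0 X).
Proof.
rewrite /regular_open /Reg eqEsubset; split => // x.
have -> : closure (@set0 X) = set0.
  by apply/esym/closure_id; exact: closed0.
by move/interior_subset.
Qed.

Definition negR p := interior (~` p).

Lemma negR_reg p : open p -> regular_open (negR p).
Proof. move=> op; apply: interior_closed_regopen; exact: open_closedC. Qed.

Lemma negR_disj p x : p x -> negR p x -> False.
Proof. by move=> px /interior_subset. Qed.

Lemma open_sub_negR p q : open q -> q `&` p = set0 -> q `<=` negR p.
Proof.
move=> oq qp; rewrite /negR -open_subsetE // => x qx px.
by have : (q `&` p) x by []; rewrite qp.
Qed.

Lemma RegI_open (A B : set X) : open A -> open B -> Reg A `&` Reg B `<=` Reg (A `&` B).
Proof.
move=> oA oB x [xA xB].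
have oO : open (Reg A `&` Reg B) by apply: openI; exact: open_Reg.
suff H : Reg A `&` Reg B `<=` closure (A `&` B).
  by apply: (interiorS H); move: oO; rewrite openE => /(_ x); apply.
move=> y [yA yB] N yN.
have [N' [oN' N'y N'N]] : exists N', [/\ open N', N' y & N' `<=` N].
  by move: yN; rewrite nbhsE => -[N' [oN' N'y] N'N]; exists N'.
have yclA : closure A y by apply: interior_subset.
have : nbhs y (N' `&` (Reg A `&` Reg B)).
  by apply: open_nbhs_nbhs; split => //; apply: openI.
move=> /yclA [z [Az [N'z [zA zB]]]].
have zclB : closure B z by apply: interior_subset.
have : nbhs z (A `&` N').
  by apply: open_nbhs_nbhs; split => //; apply: openI.
move=> /zclB [w [Bw [Aw N'w]]].
by exists w; split; [split|apply: N'N].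
Qed.

End RegLemmas.

Section UF.
Context {X : topologicalType}.
Implicit Types (p q : set X) (G H : set (set X)).

Lemma uf_reg G p : ro_ultrafilter G -> G p -> regular_open p.
Proof. by case=> [[[+ _ _ _] _] _]; apply. Qed.
Lemma uf_T G : ro_ultrafilter G -> G setT.
Proof. by case=> [[[_ + _ _] _] _]. Qed.
Lemma uf_I G p q : ro_ultrafilter G -> G p -> G q -> G (p `&` q).
Proof. by case=> [[[_ _ + _] _] _]; apply. Qed.
Lemma uf_up G p q : ro_ultrafilter G -> G p -> regular_open q -> p `<=` q -> G q.
Proof. by case=> [[[_ _ _ +] _] _]; apply. Qed.
Lemma uf_0 G : ro_ultrafilter G -> ~ G set0.
Proof. by case=> [[_ +] _]. Qed.
Lemma uf_max G H : ro_ultrafilter G -> ro_proper_filter H -> G `<=` H -> H = G.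
Proof. by case=> _; apply. Qed.

Lemma uf_ne G p : ro_ultrafilter G -> G p -> p !=set0.
Proof.
move=> uG Gp; have [//|np] := pselect (p !=set0).
exfalso; apply: (uf_0 uG); suff <- : p = set0 by [].
by apply/seteqP; split=> x // px; apply: np; exists x.
Qed.

Lemma uf_dich G p : ro_ultrafilter G -> regular_open p -> G p \/ G (negR p).
Proof.
move=> uG rp.
have [[g [Gg gp]]|nog] := pselect (exists g, G g /\ g `&` p = set0).
  right; apply: (uf_up uG Gg); first exact: negR_reg (reg_open rp).
  by apply: open_sub_negR => //; apply: reg_open; exact: (uf_reg uG).
left.
pose H := [set r | regular_open r /\ exists g, G g /\ g `&` p `<=` r].
have pH : ro_proper_filter H.
  split; first split.
  - by move=> r [].
  - by split; [exact: reg_setT | exists setT; split => //; exact: uf_T].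
  - move=> r s [rr [g [Gg gr]]] [rs [h [Gh hs]]]; split; first exact: regI.
    exists (g `&` h); split; first exact: uf_I.
    by move=> x [[gx hx] px]; split; [apply: gr|apply: hs].
  - move=> r s [rr [g [Gg gr]]] rs rsub; split => //.
    by exists g; split => //; apply: subset_trans rsub.
  - move=> [_ [g [Gg gsub]]]; apply: nog; exists g; split => //.
    by rewrite -subset0.
have GH : G `<=` H.
  move=> g Gg; split; first exact: (uf_reg uG).
  by exists g; split => // x [].
have <- := uf_max uG pH GH.
split => //; exists setT; split; first exact: uf_T.
by move=> x [].
Qed.

Lemma uf_neg_false G p : ro_ultrafilter G -> G p -> G (negR p) -> False.
Proof.
move=> uG Gp Gn; have := uf_I uG Gp Gn.
have -> : p `&` negR p = set0.
  by rewrite -subset0 => x [px nx]; exact: negR_disj px nx.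
exact: uf_0.
Qed.

Lemma uf_ext G0 : ro_proper_filter G0 ->
  exists G, ro_ultrafilter G /\ G0 `<=` G.
Proof.
move=> pG0.
pose P := [set A : set (set X) | ro_proper_filter (A `|` G0)].
have [|A [PA Amax]] := @Zorn_bigcup _ P.
  move=> Fm FmP tot.
  case: (pselect (Fm !=set0)) => [[A0 FA0]|Fm0]; last first.
    rewrite (_ : Fm = set0); first by rewrite bigcup_set0 /P /= set0U.
    by apply/seteqP; split=> x // Fx; apply: Fm0; exists x.
  have memK : forall r, (\bigcup_(A in Fm) A `|` G0) r <->
      exists2 A, Fm A & (A `|` G0) r.
    move=> r; split.
      by case=> [[A FA Ar]|G0r]; [exists A => //; left|exists A0 => //; right].
    by case=> A FA [Ar|G0r]; [left; exists A|right].
  have big2 : forall r s, (\bigcup_(A in Fm) A `|` G0) r ->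
      (\bigcup_(A in Fm) A `|` G0) s ->
      exists2 A, Fm A & (A `|` G0) r /\ (A `|` G0) s.
    move=> r s /memK [A FA Ar] /memK [B FB Bs].
    have [AB|BA] := tot A B FA FB.
      exists B => //; split => //; case: Ar => [/AB|]; [left|right] => //.
    exists A => //; split => //; case: Bs => [/BA|]; [left|right] => //.
  have FP : forall A, Fm A -> ro_proper_filter (A `|` G0) := FmP.
  split; first split.
  - by move=> r /memK [A FA Ar]; have [[+ _ _ _] _] := FP _ FA; apply.
  - by apply/memK; exists A0 => //; have [[_ + _ _] _] := FP _ FA0.
  - move=> r s Kr Ks; have [A FA [Ar As]] := big2 _ _ Kr Ks.
    by apply/memK; exists A => //; have [[_ _ + _] _] := FP _ FA; apply.
  - move=> r s /memK [A FA Ar] rs sub.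
    apply/memK; exists A => //; have [[_ _ _ h] _] := FP _ FA; exact: (h r).
  - by move=> /memK [A FA]; have [_ +] := FP _ FA.
exists (A `|` G0); split; last by move=> x; right.
split => // H pH AH.
have AH' : A `<=` H by move=> x Ax; apply: AH; left.
have G0H : G0 `<=` H by move=> x Gx; apply: AH; right.
have PH : P H by rewrite /P /= (_ : H `|` G0 = H) //; apply/setUidl.
have HA : H = A.
  case: (pselect (H = A)) => // nHA; exfalso; apply: (Amax H) => //.
  split => // HsA; apply: nHA; exact/seteqP.
by rewrite -HA; apply/esym/setUidl.
Qed.


End UF.

Lemma uf_neq {X : topologicalType} (G H : set (set X)) :
  ro_ultrafilter G -> ro_ultrafilter H -> G <> H -> exists p, G p /\ ~ H p.
Proof.
move=> uG uH GH; apply: contrapT => nex; apply: GH.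
apply/esym; apply: (uf_max uG); first by case: uH.
by move=> p Gp; apply: contrapT => Hp; apply: nex; exists p.
Qed.

Section FinI.
Context {T : choiceType} (D : set (set T)).

Lemma seq_base (x : T) :
  (exists B, D B /\ B x) ->
  (forall B1 B2, D B1 -> D B2 -> B1 x -> B2 x ->
     exists B, [/\ D B, B x & B `<=` B1 `&` B2]) ->
  forall s : seq (set T), (forall i, i \in s -> D i) -> (forall i, i \in s -> i x) ->
  exists B, [/\ D B, B x & forall y, B y -> forall i, i \in s -> i y].
Proof.
move=> cov join; elim=> [|a s IH] sD sx.
  by have [B [DB Bx]] := cov; exists B; split => // y _ i; rewrite in_nil.
have [B [DB Bx Bs]] : exists B, [/\ D B, B x & forall y, B y -> forall i, i \in s -> i y].
  by apply: IH => i si; [apply: sD|apply: sx]; rewrite inE si orbT.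
have Da : D a by apply: sD; rewrite inE eqxx.
have ax : a x by apply: sx; rewrite inE eqxx.
have [C [DC Cx CaB]] := join _ _ Da DB ax Bx.
exists C; split => // y Cy i; rewrite inE => /orP [/eqP ->|si].
  by have [] := CaB _ Cy.
by apply: (Bs y) => //; have [] := CaB _ Cy.
Qed.

Lemma finI_base (x : T) :
  (exists B, D B /\ B x) ->
  (forall B1 B2, D B1 -> D B2 -> B1 x -> B2 x ->
     exists B, [/\ D B, B x & B `<=` B1 `&` B2]) ->
  forall A, finI_from D id A -> A x -> exists B, [/\ D B, B x & B `<=` A].
Proof.
move=> cov join A [D' D'D <-] Ax.
have [B [DB Bx HB]] := seq_base cov join (s := finmap.enum_fset D') (fun i Hi => set_mem (D'D i Hi)) (fun i Hi => Ax i Hi).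
by exists B; split => // y By i Di; exact: HB.
Qed.

End FinI.

Section StTop.
Context {X : topologicalType}.
Implicit Types (p q r : set X) (G H : St X).

Lemma St_openE (B : set (St X)) : open B <->
  exists2 D', D' `<=` finI_from (@St_subbase X) id & \bigcup_(i in D') i = B.
Proof. by []. Qed.
Lemma St_nbhsE G (B : set (St X)) : nbhs G B <->
  exists A, [/\ open A, A G & A `<=` B].
Proof. by []. Qed.

Definition uG G : ro_ultrafilter (proj1_sig G) := proj2_sig G.

Lemma Nq_open q : regular_open q -> open (Nq q).
Proof.
move=> rq; apply/St_openE; exists [set Nq q]; last by rewrite bigcup_set1.
move=> _ ->; apply: finI_from1; exists q; split => //.
Qed.

Lemma NqI p q : regular_open p -> regular_open q ->
  Nq p `&` Nq q = Nq (p `&` q) :> set (St X).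
Proof.
move=> rp rq; apply/seteqP; split=> G.
  by move=> [Gp Gq]; apply: uf_I (uG G) Gp Gq.
move=> Gpq; split; by apply: (uf_up (uG G) Gpq) => // x [].
Qed.

Lemma NqT : Nq setT = [set: St X].
Proof. by apply/seteqP; split=> // G _; apply: uf_T (uG G). Qed.

Lemma St_nbhs G (B : set (St X)) : nbhs G B ->
  exists q, [/\ regular_open q, Nq q G & Nq q `<=` B].
Proof.
move=> /St_nbhsE [A [/St_openE [D' D'f DA] AG AB]].
move: AG; rewrite -DA => -[i D'i iG].
have [||C [[q [rq ->]] Cx CA]] := @finI_base _ (@St_subbase X) G _ _ i (D'f _ D'i) iG.
- by exists (Nq setT); split; [exists setT; split => //; exact: reg_setT|exact: uf_T (uG G)].
- move=> _ _ [q1 [rq1 ->]] [q2 [rq2 ->]] G1 G2.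
  exists (Nq (q1 `&` q2)); split.
  + by exists (q1 `&` q2); split => //; exact: regI.
  + by rewrite -NqI.
  + by rewrite NqI.
by exists q; split => // H /CA Hi; apply: AB; rewrite -DA; exists i.
Qed.

Lemma St_nbhs_Nq G q : regular_open q -> Nq q G -> nbhs G (Nq q).
Proof. by move=> rq Gq; apply: open_nbhs_nbhs; split => //; exact: Nq_open. Qed.

Lemma St_ex p : regular_open p -> p !=set0 -> exists G : St X, Nq p G.
Proof.
move=> rp [x px].
pose G0 := [set r | regular_open r /\ p `<=` r].
have pG0 : ro_proper_filter G0.
  split; first split.
  - by move=> r [].
  - by split => //; exact: reg_setT.
  - move=> r s [rr pr] [rs ps]; split; first exact: regI.
    by move=> y py; split; [apply: pr|apply: ps].
  - by move=> r s [rr pr] rs sub; split => //; apply: subset_trans sub.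
  - by move=> [_ /(_ x px)].
have [G [uG' G0G]] := uf_ext pG0.
by exists (exist _ G uG'); apply: G0G; split.
Qed.

Lemma Nq_compact q : regular_open q -> compact (Nq q).
Proof.
move=> rq Fl PF Fq.
pose G0 := [set r | regular_open r /\ Fl (Nq r)].
have pG0 : ro_proper_filter G0.
  split; first split.
  - by move=> r [].
  - by split; [exact: reg_setT|rewrite NqT; exact: filterT].
  - move=> r s [rr Fr] [rs Fs]; split; first exact: regI.
    by rewrite -NqI //; exact: filterI.
  - move=> r s [rr Fr] rs sub; split => //; apply: filterS Fr.
    by move=> G Gr; apply: (uf_up (uG G) Gr).
  - move=> [_ F0]; suff : Fl set0 by apply: filter_not_empty.
    by apply: filterS F0 => G /= HG0; apply: (uf_0 (uG G)).
have [G [uG' G0G]] := uf_ext pG0.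
exists (exist _ G uG'); split; first by apply: G0G.
move=> A B FA /St_nbhs [r [rr Gr rB]].
apply: contrapT => nAB.
have AN : A `<=` Nq (negR r).
  move=> H HA; have [Hr|//] := uf_dich (uG H) rr.
  by exfalso; apply: nAB; exists H; split => //; apply: rB.
have : G0 (negR r).
  split; first by apply: negR_reg; exact: reg_open.
  by apply: filterS FA.
by move/G0G; apply: uf_neg_false uG' Gr.
Qed.

End StTop.

Section Germs.
Context {X : topologicalType} (F : presheaf X).
Implicit Types (f g h : Sec F) (G H : St X).

Definition Agr f g : set X :=
  [set x | exists V, [/\ Oset V, agree_on F f g V & V x]].

Lemma Agr_open f g : open (Agr f g).
Proof.
rewrite openE => x [V [[oV V0] ag Vx]].
apply: (@filterS _ _ _ V); last by apply: open_nbhs_nbhs.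
by move=> y Vy; exists V; split.
Qed.

Lemma agree_sub_dom f g V : agree_on F f g V -> V `<=` sdom F f `&` sdom F g.
Proof. by case=> hf [hg _] x Vx; split; [apply: hf|apply: hg]. Qed.

Lemma Agr_sub f g : Agr f g `<=` sdom F f `&` sdom F g.
Proof. by move=> x [V [_ ag Vx]]; apply: agree_sub_dom ag _ Vx. Qed.

Lemma agree_sub f g V W : Oset V -> Oset W -> W `<=` V ->
  agree_on F f g V -> agree_on F f g W.
Proof.
move=> OV OW WV [hf [hg e]].
have hWf : W `<=` sdom F f by move=> x /WV /hf.
have hWg : W `<=` sdom F g by move=> x /WV /hg.
exists hWf, hWg.
rewrite -(res_comp hf WV hWf _ (sdom_O F f) OV OW).
rewrite -(res_comp hg WV hWg _ (sdom_O F g) OV OW).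
by rewrite e.
Qed.

Lemma agree_sym f g V : agree_on F f g V -> agree_on F g f V.
Proof. by case=> hf [hg e]; exists hg, hf. Qed.

Lemma agree_trans f g h V : agree_on F f g V -> agree_on F g h V ->
  agree_on F f h V.
Proof.
case=> hf [hg e1] [hg' [hh e2]]; exists hf, hh; rewrite e1 -e2.
by congr (res _ _); apply: Prop_irrelevance.
Qed.

Lemma Agr_sym f g : Agr f g = Agr g f.
Proof.
by apply/seteqP; split=> x [V [OV ag Vx]]; exists V; split => //; apply: agree_sym.
Qed.

Lemma Agr_trans f g h : Agr f g `&` Agr g h `<=` Agr f h.
Proof.
move=> x [[V1 [[oV1 _] a1 V1x]] [V2 [[oV2 _] a2 V2x]]].
have O12 : Oset (V1 `&` V2) by split; [apply: openI|exists x].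
exists (V1 `&` V2); split => //.
apply: agree_trans (agree_sub _ O12 _ a1) (agree_sub _ O12 _ a2).
- by split => //; exists x.
- by move=> y [].
- by split => //; exists x.
- by move=> y [].
Qed.

Lemma agree_refl f : agree_on F f f (sdom F f).
Proof. by exists (@subset_refl _ _), (@subset_refl _ _). Qed.

Lemma dom_sub_Agr f : sdom F f `<=` Agr f f.
Proof. by move=> x fx; exists (sdom F f); split => //; [exact: sdom_O|exact: agree_refl]. Qed.

Lemma Reg_closure (U V : set X) : U `<=` closure V -> Reg U `<=` Reg V.
Proof.
move=> UV; rewrite /Reg; apply: interiorS.
have -> : closure V = closure (closure V) by apply/closure_id; exact: closed_closure.
exact: closureS.
Qed.

Lemma equivG_Agr G f g : equivG F G f g <->
  [/\ Gbar G (sdom F f), Gbar G (sdom F g) & proj1_sig G (Reg (Agr f g))].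
Proof.
split.
  move=> [Gf Gg [U [[[oU U0] GU] Ufg dense]]]; split => //.
  apply: (uf_up (uG G) GU); first exact: Reg_reg.
  apply: Reg_closure => x Ux N.
  rewrite nbhsE => -[N' [oN' N'x] N'N].
  have OW : Oset (N' `&` U) by split; [apply: openI|exists x].
  have [V [[oV [y Vy]] VW Vfg agV]] := dense _ OW (fun z => @proj2 _ _).
  exists y; split; first by exists V; split => //; split => //; exists y.
  by apply: N'N; have [] := VW _ Vy.
move=> [Gf Gg GA]; split => //.
have [z /interior_subset zA] := uf_ne (uG G) GA.
have [y [Ay _]] := zA setT filterT.
have OA : Oset (Agr f g) by split; [exact: Agr_open|exists y].
exists (Agr f g); split => //; first exact: Agr_sub.
move=> W [oW [x Wx]] WA.
have [V [OV agV Vx]] := WA _ Wx.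
have OWV : Oset (W `&` V) by split; [apply: openI => //; case: OV|exists x].
exists (W `&` V); split.
- exact: OWV.
- by move=> t [].
- by move=> t [_ Vt]; apply: agree_sub_dom agV _ Vt.
- by apply: agree_sub agV => // t [].
Qed.

End Germs.

Section Germs2.
Context {X : topologicalType} (F : presheaf X).
Implicit Types (f g h : Sec F) (G H : St X).

Lemma Gbar_of G f q : proj1_sig G q -> q `<=` Reg (sdom F f) -> Gbar G (sdom F f).
Proof.
move=> Gq sub; split; first exact: sdom_O.
by apply: (uf_up (uG G) Gq) => //; exact: Reg_reg.
Qed.

Lemma equivG_refl G f : Gbar G (sdom F f) -> equivG F G f f.
Proof.
move=> Gf; apply/equivG_Agr; split => //.
apply: (uf_up (uG G) Gf.2); first exact: Reg_reg.
by apply: Reg_mono; exact: dom_sub_Agr.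
Qed.

Lemma equivG_sym G f g : equivG F G f g -> equivG F G g f.
Proof. by move/equivG_Agr => [a b c]; apply/equivG_Agr; split => //; rewrite Agr_sym. Qed.

Lemma equivG_trans G f g h : equivG F G f g -> equivG F G g h -> equivG F G f h.
Proof.
move/equivG_Agr => [a b c] /equivG_Agr [_ d e]; apply/equivG_Agr; split => //.
have := uf_I (uG G) c e => GI.
apply: (uf_up (uG G) GI); first exact: Reg_reg.
apply: subset_trans (RegI_open (Agr_open _ _) (Agr_open _ _)) _.
by apply: Reg_mono; exact: Agr_trans.
Qed.

Lemma germ_eq G f g : equivG F G f g -> germ F G f = germ F G g.
Proof.
move=> fg; apply/seteqP; split => h /=.
  by move=> fh; apply: equivG_trans (equivG_sym fg) fh.
by move=> gh; apply: equivG_trans fg gh.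
Qed.

Lemma germ_equiv G f g : Gbar G (sdom F g) -> germ F G f = germ F G g -> equivG F G f g.
Proof.
move=> Gg E; have : germ F G g g by apply: equivG_refl.
by rewrite -E.
Qed.

Lemma local_equiv G f g : equivG F G f g -> exists r, [/\ regular_open r, proj1_sig G r &
  forall H, proj1_sig H r -> [/\ germ F H f = germ F H g, Gbar H (sdom F f) & Gbar H (sdom F g)]].
Proof.
move/equivG_Agr => [Gf Gg GA].
exists (Reg (Agr f g) `&` (Reg (sdom F f) `&` Reg (sdom F g))); split.
- by apply: regI; [|apply: regI]; exact: Reg_reg.
- by apply: uf_I (uG G) GA (uf_I (uG G) Gf.2 Gg.2).
move=> H Hr.
have Hf : Gbar H (sdom F f) by apply: Gbar_of Hr _ => x [_ []].
have Hg : Gbar H (sdom F g) by apply: Gbar_of Hr _ => x [_ []].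
split => //; apply: germ_eq; apply/equivG_Agr; split => //.
by apply: (uf_up (uG H) Hr); [exact: Reg_reg|move=> x []].
Qed.

Lemma local_nequiv G f g : Gbar G (sdom F f) -> Gbar G (sdom F g) ->
  ~ equivG F G f g -> exists r, [/\ regular_open r, proj1_sig G r &
  forall H, proj1_sig H r -> ~ equivG F H f g].
Proof.
move=> Gf Gg nfg.
have nA : ~ proj1_sig G (Reg (Agr f g)).
  by move=> GA; apply: nfg; apply/equivG_Agr; split.
have rn : regular_open (negR (Reg (Agr f g))) by apply: negR_reg; exact: open_Reg.
exists (negR (Reg (Agr f g))); split => //.
  by have [//|] := uf_dich (uG G) (Reg_reg (Agr f g)).
move=> H Hr /equivG_Agr [_ _ HA]; exact: uf_neg_false (uG H) HA Hr.
Qed.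

Definition mkL G f (h : Gbar G (sdom F f)) : Lambda F :=
  exist _ (G, germ F G f) (ex_intro _ f (conj h erefl)).

Lemma L_eq (e1 e2 : Lambda F) : p1 F e1 = p1 F e2 ->
  (proj1_sig e1).2 = (proj1_sig e2).2 -> e1 = e2.
Proof.
case: e1 => [[G1 s1] P1]; case: e2 => [[G2 s2] P2]; rewrite /p1 /= => E1 E2.
subst; by rewrite (Prop_irrelevance P1 P2).
Qed.

Lemma L_repr (e : Lambda F) : exists f, Gbar (p1 F e) (sdom F f) /\
  (proj1_sig e).2 = germ F (p1 F e) f.
Proof. exact: proj2_sig e. Qed.

Lemma L_openE (B : set (Lambda F)) : open B <->
  exists2 D', D' `<=` finI_from (B1 F) id & \bigcup_(i in D') i = B.
Proof. by []. Qed.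
Lemma L_nbhsE e (B : set (Lambda F)) : nbhs e B <->
  exists A, [/\ open A, A e & A `<=` B].
Proof. by []. Qed.

Lemma B1_open A : B1 F A -> open A.
Proof.
move=> BA; apply/L_openE; exists [set A]; last by rewrite bigcup_set1.
by move=> _ ->; apply: finI_from1.
Qed.

Lemma B1_cov (e : Lambda F) : exists A, B1 F A /\ A e.
Proof.
have [f [Gf ef]] := L_repr e.
exists (dot_image F f (Reg (sdom F f))); split.
  by exists f, (Reg (sdom F f)); split => //; exact: Reg_reg.
by split => //; case: Gf.
Qed.

Lemma B1_join (e : Lambda F) A1 A2 : B1 F A1 -> B1 F A2 -> A1 e -> A2 e ->
  exists A, [/\ B1 F A, A e & A `<=` A1 `&` A2].
Proof.
move=> [f1 [q1 [rq1 sq1 ->]]] [f2 [q2 [rq2 sq2 ->]]] [Gq1 e1] [Gq2 e2].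
have G1 := Gbar_of Gq1 sq1; have G2 := Gbar_of Gq2 sq2.
have eq12 : equivG F (p1 F e) f1 f2 by apply: germ_equiv => //; rewrite -e1 -e2.
have [r [rr Gr Hr]] := local_equiv eq12.
exists (dot_image F f1 (q1 `&` (q2 `&` r))); split.
- exists f1, (q1 `&` (q2 `&` r)); split => //; first by apply: regI => //; exact: regI.
  by move=> x [/sq1].
- split => //; apply: (uf_I (uG _)) => //; exact: (uf_I (uG _)).
move=> e' [He' E']; have uH := uG (p1 F e').
have H1 : Nq q1 (p1 F e') by apply: (uf_up uH He') => // x [].
have H2 : Nq q2 (p1 F e') by apply: (uf_up uH He') => // x [_ []].
have H3 : Nq r (p1 F e') by apply: (uf_up uH He') => // x [_ []].
split; split => //.
by rewrite E'; have [] := Hr _ H3.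
Qed.

Lemma L_nbhs (e : Lambda F) (O : set (Lambda F)) : nbhs e O ->
  exists A, [/\ B1 F A, A e & A `<=` O].
Proof.
move=> /L_nbhsE [A [/L_openE [D' D'f DA] Ae AO]].
move: Ae; rewrite -DA => -[i D'i ie].
have [||C [BC Ce Ci]] := @finI_base _ (B1 F) e _ _ i (D'f _ D'i) ie.
- by have [A' [BA' A'e]] := B1_cov e; exists A'.
- by move=> ? ? ? ? ? ?; apply: B1_join.
by exists C; split => // y /Ci yi; apply: AO; rewrite -DA; exists i.
Qed.

Lemma B1_nbhs (e : Lambda F) A : B1 F A -> A e -> nbhs e A.
Proof. by move=> BA Ae; apply: open_nbhs_nbhs; split => //; exact: B1_open. Qed.

End Germs2.

Section Sections.
Context {X : topologicalType} (F : presheaf X).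
Implicit Types (f g h : Sec F) (G H : St X).

Definition sec_spec f (s : St X -> Lambda F) :=
  forall G, Nq (Reg (sdom F f)) G -> p1 F (s G) = G /\ (proj1_sig (s G)).2 = germ F G f.

Lemma sec_ex f : exists s, sec_spec f s.
Proof.
have fne : Reg (sdom F f) !=set0.
  by have [_ [x fx]] := sdom_O F f; exists x; apply: Reg_sub => //; case: (sdom_O F f).
have [G0 HG0] := St_ex (Reg_reg (sdom F f)) fne.
pose e0 := mkL (Gbar_of HG0 (@subset_refl _ _)).
exists (fun G => match pselect (Nq (Reg (sdom F f)) G) with
  | left h => mkL (Gbar_of h (@subset_refl _ _)) | right _ => e0 end).
by move=> G h; case: pselect.
Qed.

Lemma sec_cont f s : sec_spec f s -> {within Nq (Reg (sdom F f)), continuous s}.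
Proof.
move=> sp; rewrite continuous_open_subspace; last exact/Nq_open/Reg_reg.
move=> G; rewrite inE => hG B /= /L_nbhs [A [[g [q [rq qg ->]]] [Gq Eg] AB]].
have [p1s s2] := sp _ hG.
rewrite p1s in Gq Eg; rewrite s2 in Eg.
have eq := germ_equiv (Gbar_of Gq qg) Eg.
have [r [rr Gr Hr]] := local_equiv eq.
have rI : regular_open (r `&` (q `&` Reg (sdom F f))).
  by apply: regI => //; apply: regI => //; exact: Reg_reg.
apply: (@filterS _ _ _ (Nq (r `&` (q `&` Reg (sdom F f))))).
  move=> H HI; apply: AB.
  have uH := uG H.
  have H1 : Nq r H by apply: (uf_up uH HI) => // x [].
  have H2 : Nq q H by apply: (uf_up uH HI) => // x [_ []].
  have H3 : Nq (Reg (sdom F f)) H by apply: (uf_up uH HI) => //; [exact: Reg_reg|move=> x [_ []]].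
  have [p1H s2H] := sp _ H3.
  split; first by rewrite p1H.
  by rewrite p1H s2H; have [] := Hr _ H1.
apply: St_nbhs_Nq => //.
by apply: (uf_I (uG G)) => //; apply: (uf_I (uG G)).
Qed.

Lemma sec_image f s q : sec_spec f s -> q `<=` Reg (sdom F f) ->
  s @` Nq q = dot_image F f q.
Proof.
move=> sp qf; apply/seteqP; split.
  move=> _ [G Gq <-].
  have Gf : Nq (Reg (sdom F f)) G by apply: (uf_up (uG G) Gq) => //; exact: Reg_reg.
  have [E1 E2] := sp _ Gf; split; [by rewrite E1|by rewrite E2 E1].
move=> e [Gq Ee]; exists (p1 F e) => //.
have Gf : Nq (Reg (sdom F f)) (p1 F e) by apply: (uf_up (uG _) Gq) => //; exact: Reg_reg.
have [E1 E2] := sp _ Gf.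
by apply: L_eq => //; rewrite E2 Ee.
Qed.

Lemma dot_compact f q : regular_open q -> q `<=` Reg (sdom F f) ->
  compact (dot_image F f q).
Proof.
move=> rq qf; have [s sp] := sec_ex f.
rewrite -(sec_image sp qf); apply: continuous_compact; last exact: Nq_compact.
apply: continuous_subspaceW (sec_cont sp).
by move=> G Gq; apply: (uf_up (uG G) Gq) => //; exact: Reg_reg.
Qed.

Lemma p1_cont : continuous (p1 F).
Proof.
move=> e B /St_nbhs [q [rq Gq qB]].
have [f [Gf Ef]] := L_repr e.
have rI : regular_open (q `&` Reg (sdom F f)) by apply: regI => //; exact: Reg_reg.
apply: (@filterS _ _ _ (dot_image F f (q `&` Reg (sdom F f)))).
  move=> e' [He' _]; apply: qB.
  by apply: (uf_up (uG _) He') => // x [].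
apply: B1_nbhs.
  by exists f, (q `&` Reg (sdom F f)); split => // x [].
by split => //; apply: (uf_I (uG _)) => //; case: Gf.
Qed.

End Sections.

Section Sep.
Context {X : topologicalType} (F : presheaf X).
Implicit Types (f g h : Sec F) (G H : St X).

Lemma B1_sep (e : Lambda F) A : B1 F A -> ~ A e ->
  exists B, [/\ B1 F B, B e & forall x, B x -> ~ A x].
Proof.
move=> [f [q [rq qf ->]]] nAe.
have [g [Gg Eg]] := L_repr e.
have rg := Reg_reg (sdom F g).
have [Hq|Hn] := uf_dich (uG (p1 F e)) rq.
  have nfg : ~ equivG F (p1 F e) f g.
    by move=> fg; apply: nAe; split => //; rewrite Eg (germ_eq fg).
  have [r [rr Gr Hr]] := local_nequiv (Gbar_of Hq qf) Gg nfg.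
  exists (dot_image F g (r `&` Reg (sdom F g))); split.
  - by exists g, (r `&` Reg (sdom F g)); split; [exact: regI|move=> x []|].
  - by split => //; apply: (uf_I (uG _)) => //; case: Gg.
  move=> e' [He' E'] [Aq AE].
  have uH := uG (p1 F e').
  have H1 : Nq r (p1 F e') by apply: (uf_up uH He') => // x [].
  have H2 : Nq (Reg (sdom F g)) (p1 F e') by apply: (uf_up uH He') => // x [].
  apply: (Hr _ H1); apply: germ_equiv; first exact: Gbar_of H2 _.
  by rewrite -AE.
have rn : regular_open (negR q) by apply: negR_reg; exact: reg_open.
exists (dot_image F g (negR q `&` Reg (sdom F g))); split.
- by exists g, (negR q `&` Reg (sdom F g)); split; [exact: regI|move=> x []|].
- by split => //; apply: (uf_I (uG _)) => //; case: Gg.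
move=> e' [He' E'] [Aq AE].
have uH := uG (p1 F e').
have H1 : Nq (negR q) (p1 F e') by apply: (uf_up uH He') => // x [].
exact: uf_neg_false uH Aq H1.
Qed.

Lemma B1_closed A : B1 F A -> closed A.
Proof.
move=> BA; rewrite -openC openE => e nAe.
have [B [BB Be BA']] := B1_sep BA nAe.
by apply: (@filterS _ _ _ B); [move=> x /BA'|exact: B1_nbhs].
Qed.

Lemma St_eq (G1 G2 : St X) : proj1_sig G1 = proj1_sig G2 -> G1 = G2.
Proof.
case: G1 => [g1 p1']; case: G2 => [g2 p2'] /= E; subst.
by rewrite (Prop_irrelevance p1' p2').
Qed.

Lemma B1_sep2 (e1 e2 : Lambda F) : e1 <> e2 ->
  exists A, [/\ B1 F A, A e1 & ~ A e2].
Proof.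
move=> ne.
have [f [Gf Ef]] := L_repr e1.
have rf := Reg_reg (sdom F f).
have [E|nE] := pselect (p1 F e1 = p1 F e2).
  exists (dot_image F f (Reg (sdom F f))); split.
  - by exists f, (Reg (sdom F f)); split.
  - by split => //; case: Gf.
  move=> [_ E2]; apply: ne; apply: L_eq => //.
  by rewrite E2 Ef E.
have [p [G1p nG2p]] : exists p, proj1_sig (p1 F e1) p /\ ~ proj1_sig (p1 F e2) p.
  by apply: uf_neq; [exact: uG|exact: uG|move=> E'; apply: nE; exact: St_eq].
have rp := uf_reg (uG _) G1p.
exists (dot_image F f (p `&` Reg (sdom F f))); split.
- by exists f, (p `&` Reg (sdom F f)); split; [exact: regI|move=> x []|].
- by split => //; apply: (uf_I (uG _)) => //; case: Gf.
move=> [H2 _]; apply: nG2p; by apply: (uf_up (uG _) H2) => // x [].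
Qed.

Lemma L_hausdorff : hausdorff_space (Lambda F).
Proof.
move=> p q cl; apply: contrapT => npq.
have [A [BA Ap nAq]] := B1_sep2 npq.
have [B [BB Bq BA']] := B1_sep BA nAq.
have [x [Ax Bx]] := cl A B (B1_nbhs BA Ap) (B1_nbhs BB Bq).
exact: BA' Bx Ax.
Qed.

Lemma L_accessible : accessible_space (Lambda F).
Proof.
move=> x y /eqP nxy; have [A [BA Ax nAy]] := B1_sep2 nxy.
by exists A; split; [exact: B1_open|rewrite in_setE|rewrite in_setE].
Qed.

Lemma L_is_base : is_base (B1 F).
Proof.
split; first exact: B1_open.
move=> O oO x Ox; apply: L_nbhs; apply: open_nbhs_nbhs; by split.
Qed.

Lemma L_zero_dim : zero_dim (Lambda F).
Proof.
exists (B1 F); split; first exact: L_is_base.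
by move=> A BA; split; [exact: B1_open|exact: B1_closed].
Qed.

Lemma L_tychonoff : tychonoff_space (Lambda F).
Proof.
split; first exact: L_accessible.
move=> a B cB nBa.
have : nbhs a (~` B) by apply: open_nbhs_nbhs; split => //; exact: closed_openC.
move=> /L_nbhs [A [BA Aa AB]].
exists (fun e => if `[< A e >] then (0%R : Rdefinitions.R) else (1%R : Rdefinitions.R)); split.
- move=> x N /= HN.
  have [Ax|nAx] := pselect (A x).
    apply: (@filterS _ _ _ A); last exact: B1_nbhs.
    move=> y Ay /=; case: (asboolP (A y)) => [_|//].
    by have := nbhs_singleton HN; case: (asboolP (A x)) => [//|/(_ Ax)].
  have oc : open (~` A) by apply: closed_openC; exact: B1_closed.
  apply: (@filterS _ _ _ (~` A)); last by apply: open_nbhs_nbhs; split.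
  move=> y nAy /=; case: (asboolP (A y)) => [//|_].
  by have := nbhs_singleton HN; case: (asboolP (A x)).
- by case: (asboolP (A a)).
- by move=> b Bb; case: (asboolP (A b)) => // /AB.
Qed.

End Sep.

Section Main.
Context {X : topologicalType} (F : presheaf X).

Lemma B1_compact A : B1 F A -> compact A.
Proof. by move=> [f [q [rq qf ->]]]; exact: dot_compact. Qed.

Lemma L_loc_compact : locally_compact [set: Lambda F].
Proof.
move=> x _.
have [A [BA Ax]] := B1_cov x.
exists A; last by split; [exact: B1_compact|exact: B1_closed].
by apply: (@filterS _ (nbhs x) _ A (fun y => setT y -> A y)); [move=> y Ay _|exact: B1_nbhs].
Qed.

Lemma stalk_discrete G e : stalk F G e ->
  exists O : set (Lambda F), open O /\ O `&` stalk F G = [set e].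
Proof.
move=> Ge; have [f [Gf Ef]] := L_repr e.
exists (dot_image F f (Reg (sdom F f))); split.
  by apply: B1_open; exists f, (Reg (sdom F f)); split => //; exact: Reg_reg.
apply/seteqP; split.
  move=> e' [[_ E'] Ge'] /=; apply: L_eq; first by rewrite Ge' Ge.
  by rewrite E' Ef Ge' Ge.
by move=> _ ->; split => //; split => //; case: Gf.
Qed.

Lemma stalk_closed G : closed (stalk F G).
Proof.
rewrite -openC openE => e nGe.
have [f [Gf Ef]] := L_repr e.
have [p [G1p nG2p]] : exists p, proj1_sig (p1 F e) p /\ ~ proj1_sig G p.
  by apply: uf_neq; [exact: uG|exact: uG|move=> E'; apply: nGe; exact: St_eq].
have rp := uf_reg (uG _) G1p.
have BA : B1 F (dot_image F f (p `&` Reg (sdom F f))).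
  by exists f, (p `&` Reg (sdom F f)); split; [apply: regI => //; exact: Reg_reg|move=> x []|].
have Ae : dot_image F f (p `&` Reg (sdom F f)) e.
  by split => //; apply: (uf_I (uG _)) => //; case: Gf.
apply: (@filterS _ (nbhs e) _ (dot_image F f (p `&` Reg (sdom F f)))); last exact: B1_nbhs BA Ae.
move=> e' [He' _] Ge'; apply: nG2p; rewrite -Ge'.
by apply: (uf_up (uG _) He') => // x [].
Qed.

Lemma L_section f : exists s : St X -> Lambda F,
  (forall G, Nq (Reg (sdom F f)) G ->
     p1 F (s G) = G /\ (proj1_sig (s G)).2 = germ F G f) /\
  local_section (p1 F) (Nq (Reg (sdom F f))) s.
Proof.
have [s sp] := sec_ex f; exists s; split => //.
split; [exact/Nq_open/Reg_reg|exact: sec_cont|by move=> G /sp []].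
Qed.

Lemma L_etale : etale_space (p1 F).
Proof.
move=> e; have [f [Gf Ef]] := L_repr e.
have [s sp] := sec_ex f.
have rf := Reg_reg (sdom F f).
have img : p1 F @` dot_image F f (Reg (sdom F f)) = Nq (Reg (sdom F f)).
  rewrite -(sec_image sp (@subset_refl _ _)); apply/seteqP; split.
    by move=> _ [_ [G HG <-] <-]; have [-> _] := sp _ HG.
  by move=> G HG; exists (s G); [exists G|have [] := sp _ HG].
exists (dot_image F f (Reg (sdom F f))); split.
- by apply: B1_open; exists f, (Reg (sdom F f)); split.
- by split => //; case: Gf.
- by rewrite img; exact: Nq_open.
split; first by apply: continuous_subspaceT; exact: p1_cont.
exists s; split.
- rewrite img => G HG; have [E1 E2] := sp _ HG.
  by split => //; split; [rewrite E1|rewrite E1 E2].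
- move=> e' [He' E']; have [E1 E2] := sp _ He'.
  by apply: L_eq => //; rewrite E2 E'.
- by rewrite img; exact: sec_cont.
Qed.

Lemma L_noncompact : (exists G : St X, infinite_set (stalk F G)) ->
  ~ compact [set: Lambda F].
Proof.
move=> [G inf] cpt.
set S := stalk F G.
pose Fl := [set P : set (Lambda F) | finite_set (S `\` P)].
have FF : Filter Fl.
  apply: Build_Filter.
  - by rewrite /Fl /= setDT; exact: finite_set0.
  - move=> P Q FP FQ; rewrite /Fl /=.
    apply: (@sub_finite_set _ _ ((S `\` P) `|` (S `\` Q))); last by rewrite finite_setU.
    move=> x [Sx nPQ]; apply: contrapT => nx; apply: nPQ.
    by split; apply: contrapT => ?; apply: nx; [left|right].
  - move=> P Q PQ; rewrite /Fl /= => FP; apply: sub_finite_set FP.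
    by move=> x [Sx nQ]; split => // /PQ.
have PF : ProperFilter Fl.
  by apply: Build_ProperFilter => //; rewrite /Fl /= setD0.
have [z [_ clz]] := cpt Fl PF filterT.
have [Sz|nSz] := pselect (S z).
  have [W [oW WS]] := stalk_discrete Sz.
  have FA : Fl (S `\` [set z]).
    apply: (@sub_finite_set _ _ [set z]); last exact: finite_set1.
    by move=> x [Sx /= nx]; apply: contrapT => nxz; apply: nx; split.
  have Wz : W z by have : [set z] z by []; rewrite -WS => -[].
  have [y [[Sy nyz] Wy]] := clz _ _ FA (open_nbhs_nbhs (conj oW Wz)).
  apply: nyz; have : (W `&` S) y by [].
  by rewrite WS.
have FS : Fl S by rewrite /Fl /= setDv; exact: finite_set0.
have oc : open (~` S) by apply: closed_openC; exact: stalk_closed.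
have [y [Sy nSy]] := clz _ _ FS (open_nbhs_nbhs (conj oc nSz)).
exact: nSy Sy.
Qed.

End Main.

Unset Implicit Arguments. Set Strict Implicit.

Theorem mainTheorem10 (X : topologicalType) (F : presheaf X) :
  (* (1) *)
  [/\ is_base (B1 F), (forall A, B1 F A -> compact A) &
      locally_compact [set: Lambda F]%classic] /\
  (* (2) *)
  (forall G : St X,
     (forall e, stalk F G e ->
        exists O : set (Lambda F), open O /\ O `&` stalk F G = [set e]) /\
     closed (stalk F G)) /\
  (* (3) *)
  [/\ continuous (p1 F),
      (forall f : Sec F, exists s : St X -> Lambda F,
         (forall G, Nq (Reg (sdom F f)) G ->
            p1 F (s G) = G /\ (proj1_sig (s G)).2 = germ F G f) /\
         local_section (p1 F) (Nq (Reg (sdom F f))) s) &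
      etale_space (p1 F)] /\
  (* (4) *)
  [/\ hausdorff_space (Lambda F), zero_dim (Lambda F) & tychonoff_space (Lambda F)] /\
  (* (5) *)
  ((exists G : St X, infinite_set (stalk F G)) -> ~ compact [set: Lambda F]%classic).
Proof.
split; first by split; [exact: L_is_base|exact: B1_compact|exact: L_loc_compact].
split; first by move=> G; split; [exact: stalk_discrete|exact: stalk_closed].
split; first by split; [exact: p1_cont|exact: L_section|exact: L_etale].
split; first by split; [exact: L_hausdorff|exact: L_zero_dim|exact: L_tychonoff].
exact: L_noncompact.
Qed.
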